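(* Let $(G,u)$ be a unital $\ell$-group and $M=\Gamma(G,u)$, and suppose every non-zero element of $M$ is a strong unit of $G$. Then $M$ is an MV-algebra, and for every unital Riesz space $(R,1_R)$ the set of $(R,1_R)$-states on $M$ is non-empty, every $(R,1_R)$-state $s$ on $M$ is an $(R,1_R)$-state-morphism, and $\mathrm{Ker}(s)$ is a maximal ideal of $M$. If moreover $(R,1_R)$ is Archimedean, then $M$ has exactly one $(R,1_R)$-state.
   Context: For a unital $\ell$-group $(G,u)$ ($\ell$-group, not necessarily abelian, with strong unit $u$), $\Gamma(G,u)=[0,u]$ with $x\oplus y=(x+y)\wedge u$, $x^-=u-x$, $x^\sim=-x+u$, $x\odot y=(x-u+y)\vee0$ is a pseudo MV-algebra; it is an MV-algebra iff $\oplus$ is commutative. Partial addition: $x+y$ defined iff $x\odot y=0$, then $x+y=x\oplus y$. Ideal: nonempty down-set closed under $\oplus$; maximal = maximal among proper ideals. A unital Riesz space $(R,1_R)$ is a Riesz space with fixed strong unit; Archimedean if $na\le b$ for all $n$ implies $a\le0$. $\Gamma(R,1_R)$ is the MV-algebra on $[0,1_R]$. An $(R,1_R)$-state on $M$ is a map $s:M\to[0,1_R]$ with $s(1)=1_R$, $s(x+y)=s(x)+s(y)$ whenever $x+y$ defined; an $(R,1_R)$-state-morphism is a homomorphism $M\to\Gamma(R,1_R)$. $\mathrm{Ker}(s)=\{x:s(x)=0\}$. *)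

(* Defs.v *)
From Stdlib Require Import Reals.
Set Implicit Arguments.

Record lgroup := LGroup {
  lcar :> Type;
  ladd : lcar -> lcar -> lcar;
  lzero : lcar;
  lopp : lcar -> lcar;
  lle : lcar -> lcar -> Prop;
  lmeet : lcar -> lcar -> lcar;
  ljoin : lcar -> lcar -> lcar;
  laddA : forall x y z, ladd x (ladd y z) = ladd (ladd x y) z;
  ladd0l : forall x, ladd lzero x = x;
  ladd0r : forall x, ladd x lzero = x;
  laddNl : forall x, ladd (lopp x) x = lzero;
  laddNr : forall x, ladd x (lopp x) = lzero;
  lle_refl : forall x, lle x x;
  lle_anti : forall x y, lle x y -> lle y x -> x = y;
  lle_trans : forall x y z, lle x y -> lle y z -> lle x z;
  lmeet_l : forall x y, lle (lmeet x y) x;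
  lmeet_r : forall x y, lle (lmeet x y) y;
  lmeet_glb : forall x y z, lle z x -> lle z y -> lle z (lmeet x y);
  ljoin_l : forall x y, lle x (ljoin x y);
  ljoin_r : forall x y, lle y (ljoin x y);
  ljoin_lub : forall x y z, lle x z -> lle y z -> lle (ljoin x y) z;
  lle_add : forall a b x y, lle x y -> lle (ladd (ladd a x) b) (ladd (ladd a y) b)
}.

Arguments ladd {l}. Arguments lzero {l}. Arguments lopp {l}. Arguments lle {l}.
Arguments lmeet {l}. Arguments ljoin {l}.
Arguments laddA {l}. Arguments ladd0l {l}. Arguments ladd0r {l}.
Arguments laddNl {l}. Arguments laddNr {l}. Arguments lle_refl {l}.
Arguments lle_anti {l x y}. Arguments lle_trans {l x y z}.
Arguments lmeet_l {l}. Arguments lmeet_r {l}. Arguments lmeet_glb {l x y z}.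
Arguments ljoin_l {l}. Arguments ljoin_r {l}. Arguments ljoin_lub {l x y z}.
Arguments lle_add {l} a b {x y}.

Fixpoint lnmul {G : lgroup} (n : nat) (x : G) : G :=
  match n with O => lzero | S m => ladd x (lnmul m x) end.

Definition lstrong_unit {G : lgroup} (u : G) : Prop :=
  lle lzero u /\ u <> lzero /\ forall g : G, exists n : nat, lle g (lnmul n u).

Definition Gam {G : lgroup} (u : G) : Type := { x : G | lle lzero x /\ lle x u }.

Section GamOps.
Variables (G : lgroup) (u : G).

Lemma lle_addl (a x y : G) : lle x y -> lle (ladd a x) (ladd a y).
Proof. intro H. pose proof (lle_add a lzero H) as K. rewrite !ladd0r in K. exact K. Qed.
Lemma lle_addr (b x y : G) : lle x y -> lle (ladd x b) (ladd y b).
Proof. intro H. pose proof (lle_add lzero b H) as K. rewrite !ladd0l in K. exact K. Qed.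

Lemma lle_opp0 (x : G) : lle lzero x -> lle (lopp x) lzero.
Proof. intro H. pose proof (@lle_addl (lopp x) _ _ H) as K.
  rewrite ladd0r, laddNl in K. exact K. Qed.

Lemma lle_add0 (x y : G) : lle lzero x -> lle lzero y -> lle lzero (ladd x y).
Proof. intros Hx Hy. apply (lle_trans Hx).
  pose proof (@lle_addl x _ _ Hy) as K. rewrite ladd0r in K. exact K. Qed.

Lemma Gam_top_ok : lle lzero u -> lle lzero u /\ lle u u.
Proof. intro H; split; [exact H | apply lle_refl]. Qed.

Definition Gam1 (Hu : lle lzero u) : Gam u := exist _ u (Gam_top_ok Hu).

Lemma Gam_zero_ok : lle lzero u -> lle (@lzero G) lzero /\ lle lzero u.
Proof. intro H; split; [apply lle_refl | exact H]. Qed.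

Definition Gam0 (Hu : lle lzero u) : Gam u := exist _ lzero (Gam_zero_ok Hu).

Lemma oplus_ok (x y : Gam u) :
  lle lzero (lmeet (ladd (proj1_sig x) (proj1_sig y)) u) /\
  lle (lmeet (ladd (proj1_sig x) (proj1_sig y)) u) u.
Proof.
  destruct x as [x [Hx0 Hxu]], y as [y [Hy0 Hyu]]; simpl. split.
  - apply lmeet_glb; [apply lle_add0; assumption | exact (lle_trans Hx0 Hxu)].
  - apply lmeet_r.
Qed.

(* x ⊕ y = (x + y) ∧ u *)
Definition Goplus (x y : Gam u) : Gam u := exist _ _ (oplus_ok x y).

Lemma negm_ok (x : Gam u) :
  lle lzero (ladd u (lopp (proj1_sig x))) /\ lle (ladd u (lopp (proj1_sig x))) u.
Proof.
  destruct x as [x [Hx0 Hxu]]; simpl. split.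
  - pose proof (@lle_addr (lopp x) _ _ Hxu) as K. rewrite laddNr in K. exact K.
  - pose proof (@lle_addl u _ _ (lle_opp0 _ Hx0)) as K. rewrite ladd0r in K. exact K.
Qed.

(* x^- = u - x *)
Definition Gnegm (x : Gam u) : Gam u := exist _ _ (negm_ok x).

Lemma negt_ok (x : Gam u) :
  lle lzero (ladd (lopp (proj1_sig x)) u) /\ lle (ladd (lopp (proj1_sig x)) u) u.
Proof.
  destruct x as [x [Hx0 Hxu]]; simpl. split.
  - pose proof (@lle_addl (lopp x) _ _ Hxu) as K. rewrite laddNl in K. exact K.
  - pose proof (@lle_addr u _ _ (lle_opp0 _ Hx0)) as K. rewrite ladd0l in K. exact K.
Qed.

(* x^~ = -x + u *)
Definition Gnegt (x : Gam u) : Gam u := exist _ _ (negt_ok x).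

Definition Godot (x y : Gam u) : G :=
  ljoin (ladd (ladd (proj1_sig x) (lopp u)) (proj1_sig y)) lzero.

(* x + y is defined (partial addition) iff x ⊙ y = 0; then x + y = x ⊕ y *)
Definition Gsum_defined (x y : Gam u) : Prop := Godot x y = lzero.

Definition Gideal (I : Gam u -> Prop) : Prop :=
  (exists x, I x) /\
  (forall x y : Gam u, I y -> lle (proj1_sig x) (proj1_sig y) -> I x) /\
  (forall x y : Gam u, I x -> I y -> I (Goplus x y)).

Definition Gmaximal_ideal (I : Gam u -> Prop) : Prop :=
  Gideal I /\ (exists x, ~ I x) /\
  forall J : Gam u -> Prop, Gideal J -> (exists x, ~ J x) ->
    (forall x, I x -> J x) -> forall x, J x -> I x.

(* Γ(G,u) is an MV-algebra iff ⊕ is commutative *)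
Definition Gam_is_MV : Prop := forall x y : Gam u, Goplus x y = Goplus y x.

End GamOps.
Arguments Gam1 {G u}. Arguments Gam0 {G u}. Arguments Goplus {G u}.
Arguments Gnegm {G u}. Arguments Gnegt {G u}. Arguments Godot {G u}.
Arguments Gsum_defined {G u}. Arguments Gideal {G u}.
Arguments Gmaximal_ideal {G u}. Arguments Gam_is_MV {G} u.

Record riesz := Riesz {
  rcar :> Type;
  radd : rcar -> rcar -> rcar;
  rzero : rcar;
  ropp : rcar -> rcar;
  rscal : R -> rcar -> rcar;
  rle : rcar -> rcar -> Prop;
  rmeet : rcar -> rcar -> rcar;
  rjoin : rcar -> rcar -> rcar;
  raddA : forall x y z, radd x (radd y z) = radd (radd x y) z;
  raddC : forall x y, radd x y = radd y x;
  radd0 : forall x, radd rzero x = x;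
  raddN : forall x, radd (ropp x) x = rzero;
  rscalA : forall a b x, rscal a (rscal b x) = rscal (a * b) x;
  rscal1 : forall x, rscal 1 x = x;
  rscalDr : forall a x y, rscal a (radd x y) = radd (rscal a x) (rscal a y);
  rscalDl : forall a b x, rscal (a + b) x = radd (rscal a x) (rscal b x);
  rle_refl : forall x, rle x x;
  rle_anti : forall x y, rle x y -> rle y x -> x = y;
  rle_trans : forall x y z, rle x y -> rle y z -> rle x z;
  rmeet_l : forall x y, rle (rmeet x y) x;
  rmeet_r : forall x y, rle (rmeet x y) y;
  rmeet_glb : forall x y z, rle z x -> rle z y -> rle z (rmeet x y);
  rjoin_l : forall x y, rle x (rjoin x y);
  rjoin_r : forall x y, rle y (rjoin x y);
  rjoin_lub : forall x y z, rle x z -> rle y z -> rle (rjoin x y) z;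
  rle_add : forall z x y, rle x y -> rle (radd x z) (radd y z);
  rle_scal : forall a x y, (0 <= a)%R -> rle x y -> rle (rscal a x) (rscal a y)
}.

Arguments radd {r}. Arguments rzero {r}. Arguments ropp {r}. Arguments rscal {r}.
Arguments rle {r}. Arguments rmeet {r}. Arguments rjoin {r}.
Arguments raddA {r}. Arguments raddC {r}. Arguments radd0 {r}. Arguments raddN {r}.
Arguments rscalA {r}. Arguments rscal1 {r}. Arguments rscalDr {r}. Arguments rscalDl {r}.
Arguments rle_refl {r}. Arguments rle_anti {r x y}. Arguments rle_trans {r x y z}.
Arguments rmeet_l {r}. Arguments rmeet_r {r}. Arguments rmeet_glb {r x y z}.
Arguments rjoin_l {r}. Arguments rjoin_r {r}. Arguments rjoin_lub {r x y z}.
Arguments rle_add {r} z {x y}. Arguments rle_scal {r} a {x y}.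

Fixpoint rnmul {V : riesz} (n : nat) (x : V) : V :=
  match n with O => rzero | S m => radd x (rnmul m x) end.

Definition rstrong_unit {V : riesz} (e : V) : Prop :=
  rle rzero e /\ e <> rzero /\ forall v : V, exists n : nat, rle v (rnmul n e).

Definition archimedean (V : riesz) : Prop :=
  forall a b : V, (forall n : nat, rle (rnmul n a) b) -> rle a rzero.

Section States.
Variables (G : lgroup) (u : G) (Hu : lle lzero u) (V : riesz) (e : V).

Definition is_Rstate (s : Gam u -> V) : Prop :=
  (forall x, rle rzero (s x) /\ rle (s x) e) /\
  s (Gam1 Hu) = e /\
  (forall x y, Gsum_defined x y -> s (Goplus x y) = radd (s x) (s y)).

(* homomorphism of (pseudo) MV-algebras Γ(G,u) -> Γ(V,e) *)
Definition is_Rstate_morphism (s : Gam u -> V) : Prop :=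
  (forall x, rle rzero (s x) /\ rle (s x) e) /\
  s (Gam0 Hu) = rzero /\
  (forall x y, s (Goplus x y) = rmeet (radd (s x) (s y)) e) /\
  (forall x, s (Gnegm x) = radd e (ropp (s x))) /\
  (forall x, s (Gnegt x) = radd (ropp (s x)) e).

Definition Ker (s : Gam u -> V) : Gam u -> Prop := fun x => s x = rzero.

End States.
Arguments is_Rstate {G u} Hu {V} e s. Arguments is_Rstate_morphism {G u} Hu {V} e s.
Arguments Ker {G u V} s.

(* Main.v *)
Require Import Defs.
From Stdlib Require Import Reals.
From Stdlib Require Import Lra Lia Classical ProofIrrelevance.

Infix "⊞" := ladd (at level 50, left associativity).
Infix "≼" := lle (at level 70).

Section LG.
Variable G : lgroup.
Implicit Types x y z a b c g : G.

Lemma addK_l a x y : a ⊞ x = a ⊞ y -> x = y.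
Proof. intro H. rewrite <- (ladd0l x), <- (ladd0l y), <- (laddNl a), <- !laddA, H. reflexivity. Qed.
Lemma addK_r a x y : x ⊞ a = y ⊞ a -> x = y.
Proof. intro H. rewrite <- (ladd0r x), <- (ladd0r y), <- (laddNr a), !laddA, H. reflexivity. Qed.

Lemma le_add2 a b c d : a ≼ b -> c ≼ d -> a ⊞ c ≼ b ⊞ d.
Proof. intros H1 H2. apply (lle_trans (lle_addr G c _ _ H1)). apply lle_addl; exact H2. Qed.

Lemma le_addl_inv a x y : a ⊞ x ≼ a ⊞ y -> x ≼ y.
Proof. intro H. pose proof (lle_addl G (lopp a) _ _ H) as K. rewrite !laddA, !laddNl, !ladd0l in K. exact K. Qed.
Lemma le_addr_inv a x y : x ⊞ a ≼ y ⊞ a -> x ≼ y.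
Proof. intro H. pose proof (lle_addr G (lopp a) _ _ H) as K. rewrite <- !laddA, !laddNr, !ladd0r in K. exact K. Qed.

Lemma opp_opp x : lopp (lopp x) = x.
Proof. apply (addK_l (lopp x)). rewrite laddNr, laddNl. reflexivity. Qed.
Lemma opp_add x y : lopp (x ⊞ y) = lopp y ⊞ lopp x.
Proof. apply (addK_l (x ⊞ y)). rewrite laddNr, <- laddA, (laddA y), laddNr, ladd0l, laddNr. reflexivity. Qed.
Lemma opp0 : lopp (@lzero G) = lzero.
Proof. apply (addK_l lzero). rewrite laddNr, ladd0l. reflexivity. Qed.

Lemma le_opp x y : x ≼ y -> lopp y ≼ lopp x.
Proof. intro H. pose proof (lle_add (lopp y) (lopp x) H) as K.
  rewrite laddNl, ladd0l, <- laddA, laddNr, ladd0r in K. exact K. Qed.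

Lemma meet_eq x y : x ≼ y -> lmeet x y = x.
Proof. intro H. apply lle_anti. apply lmeet_l. apply lmeet_glb; [apply lle_refl|exact H]. Qed.
Lemma meetC x y : lmeet x y = lmeet y x.
Proof. apply lle_anti; apply lmeet_glb; first [apply lmeet_l | apply lmeet_r]. Qed.

Lemma meet_addr x y b : lmeet x y ⊞ b = lmeet (x ⊞ b) (y ⊞ b).
Proof.
  apply lle_anti.
  - apply lmeet_glb; apply lle_addr; [apply lmeet_l | apply lmeet_r].
  - set (w := lmeet (x ⊞ b) (y ⊞ b)).
    assert (K : w ⊞ lopp b ≼ lmeet x y).
    { apply lmeet_glb.
      + apply (le_addr_inv b). rewrite <- laddA, laddNl, ladd0r. apply lmeet_l.
      + apply (le_addr_inv b). rewrite <- laddA, laddNl, ladd0r. apply lmeet_r. }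
    pose proof (lle_addr G b _ _ K) as K2. rewrite <- laddA, laddNl, ladd0r in K2. exact K2.
Qed.
Lemma meet_addl a x y : a ⊞ lmeet x y = lmeet (a ⊞ x) (a ⊞ y).
Proof.
  apply lle_anti.
  - apply lmeet_glb; apply lle_addl; [apply lmeet_l | apply lmeet_r].
  - set (w := lmeet (a ⊞ x) (a ⊞ y)).
    assert (K : lopp a ⊞ w ≼ lmeet x y).
    { apply lmeet_glb.
      + apply (le_addl_inv a). rewrite laddA, laddNr, ladd0l. apply lmeet_l.
      + apply (le_addl_inv a). rewrite laddA, laddNr, ladd0l. apply lmeet_r. }
    pose proof (lle_addl G a _ _ K) as K2. rewrite laddA, laddNr, ladd0l in K2. exact K2.
Qed.

Lemma le_0_addr a x : lzero ≼ a -> x ≼ a ⊞ x.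
Proof. intro H. pose proof (lle_addr G x _ _ H) as K. rewrite ladd0l in K. exact K. Qed.

Lemma disj_step x y w : lzero ≼ y -> lmeet x y = lzero -> lmeet x w = lzero -> lzero ≼ lmeet x (y ⊞ w) -> lmeet x (y ⊞ w) = lzero.
Proof.
  intros Hy Hxy Hxw H0. apply lle_anti; [|exact H0].
  rewrite <- Hxy. apply lmeet_glb; [apply lmeet_l|].
  apply (lle_trans (y := lmeet (y ⊞ x) (y ⊞ w))).
  - apply lmeet_glb; [apply (lle_trans (lmeet_l _ _)); apply le_0_addr; exact Hy | apply lmeet_r].
  - rewrite <- meet_addl, Hxw, ladd0r. apply lle_refl.
Qed.

Lemma nmul_nonneg n x : lzero ≼ x -> lzero ≼ lnmul n x.
Proof. intro H. induction n; simpl. apply lle_refl. apply lle_add0; assumption. Qed.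

Lemma disj_n x y n : lzero ≼ x -> lzero ≼ y -> lmeet x y = lzero -> lmeet x (lnmul n y) = lzero.
Proof.
  intros Hx Hy H. induction n; simpl.
  - apply lle_anti; [apply lmeet_r | apply lmeet_glb; [exact Hx | apply lle_refl]].
  - apply disj_step; auto. apply lmeet_glb; auto. apply lle_add0; auto using nmul_nonneg.
Qed.

Lemma nmul_mono n x y : x ≼ y -> lnmul n x ≼ lnmul n y.
Proof. intro H. induction n; simpl. apply lle_refl. apply le_add2; auto. Qed.

Lemma nmul_add m n x : lnmul m x ⊞ lnmul n x = lnmul (m + n) x.
Proof. induction m; simpl. apply ladd0l. rewrite <- laddA, IHm. reflexivity. Qed.

Lemma nmul_comm n x : x ⊞ lnmul n x = lnmul n x ⊞ x.
Proof.
  replace (x ⊞ lnmul n x) with (lnmul 1 x ⊞ lnmul n x) by (simpl; rewrite ladd0r; reflexivity).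
  replace (lnmul n x ⊞ x) with (lnmul n x ⊞ lnmul 1 x) by (simpl; rewrite ladd0r; reflexivity).
  rewrite !nmul_add, Nat.add_comm. reflexivity. Qed.

End LG.


Section RZ.
Variable V : riesz.
Implicit Types v w c d : V.

Lemma radd0r v : radd v rzero = v. Proof. rewrite raddC; apply radd0. Qed.
Lemma raddNr v : radd v (ropp v) = rzero. Proof. rewrite raddC; apply raddN. Qed.
Lemma raddK (a : V) v w : radd a v = radd a w -> v = w.
Proof. intro H. rewrite <- (radd0 v), <- (radd0 w), <- (raddN a), <- !raddA, H. auto. Qed.
Lemma rle_add2 (a b : V) c d : rle a b -> rle c d -> rle (radd a c) (radd b d).
Proof. intros H1 H2. apply (rle_trans (rle_add c H1)). rewrite !(raddC b). apply rle_add; auto. Qed.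
Lemma rscal0l v : rscal 0 v = rzero.
Proof. apply (raddK (rscal 0 v)). rewrite <- rscalDl, Rplus_0_r, radd0r. auto. Qed.
Lemma rscal0r (a : R) : rscal a (@rzero V) = rzero.
Proof. apply (raddK (rscal a rzero)). rewrite <- rscalDr, !radd0r. auto. Qed.
Lemma rnmul_scal n v : rnmul n v = rscal (INR n) v.
Proof. induction n; simpl rnmul. rewrite rscal0l; auto.
  rewrite IHn, S_INR, Rplus_comm, rscalDl, rscal1. auto. Qed.
Lemma scal_nonneg a v : (0 <= a)%R -> rle rzero v -> rle rzero (rscal a v).
Proof. intros Ha Hv. rewrite <- (rscal0r a). apply rle_scal; auto. Qed.
Lemma scal_le a b v : rle rzero v -> (a <= b)%R -> rle (rscal a v) (rscal b v).
Proof. intros Hv H. replace b with (a + (b - a))%R by ring. rewrite rscalDl.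
  rewrite <- (radd0r (rscal a v)) at 1. rewrite !(raddC (rscal a v)). apply rle_add.
  apply scal_nonneg; auto. lra. Qed.
Lemma scal_m1 v : radd (rscal (-1) v) v = rzero.
Proof. rewrite <- (rscal1 v) at 2. rewrite <- rscalDl. replace (-1 + 1)%R with 0%R by ring. apply rscal0l. Qed.
Lemma scal_m1_le v : rle rzero v -> rle (rscal (-1) v) rzero.
Proof. intro H. rewrite <- (scal_m1 v). rewrite <- (radd0r (rscal (-1) v)) at 1. rewrite !(raddC (rscal (-1) v)).
  apply rle_add; auto. Qed.
Lemma meet_ge w e : rle e w -> rmeet w e = e.
Proof. intro H. apply rle_anti. apply rmeet_r. apply rmeet_glb; auto. apply rle_refl. Qed.
Lemma meet_le w e : rle w e -> rmeet w e = w.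
Proof. intro H. apply rle_anti. apply rmeet_l. apply rmeet_glb; auto. apply rle_refl. Qed.
Lemma rle_sub (a b : V) c : rle (radd a c) b -> rle a (radd b (ropp c)).
Proof. intro H. pose proof (rle_add (ropp c) H) as K. rewrite <- raddA, raddNr, radd0r in K. exact K. Qed.
End RZ.


Section TOT.
Variable G : lgroup.
Variable u : G.
Hypothesis Hu : lstrong_unit u.
Hypothesis Hyp : forall x : Gam u, proj1_sig x <> lzero -> lstrong_unit (proj1_sig x).
Implicit Types x y z a b c g : G.

Lemma u_pos : lzero ≼ u. Proof. exact (proj1 Hu). Qed.
Lemma u_nz : u <> lzero. Proof. exact (proj1 (proj2 Hu)). Qed.

Lemma HypM x : lzero ≼ x -> x ≼ u -> x <> lzero -> forall g, exists n, g ≼ lnmul n x.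
Proof. intros H0 H1 Hn. exact (proj2 (proj2 (Hyp (exist _ x (conj H0 H1)) Hn))). Qed.

Lemma meet_nonneg x y : lzero ≼ x -> lzero ≼ y -> lzero ≼ lmeet x y.
Proof. intros; apply lmeet_glb; auto. Qed.

Lemma disj_zero x y : lzero ≼ x -> lzero ≼ y -> lmeet x y = lzero -> x = lzero \/ y = lzero.
Proof.
  intros Hx Hy H.
  set (x' := lmeet x u). set (y' := lmeet y u).
  assert (Hx' : lzero ≼ x') by (apply meet_nonneg; auto using u_pos).
  assert (Hy' : lzero ≼ y') by (apply meet_nonneg; auto using u_pos).
  assert (Hxy' : lmeet x' y' = lzero).
  { apply lle_anti; [|apply meet_nonneg; auto]. rewrite <- H.
    apply lmeet_glb. apply (lle_trans (lmeet_l _ _)), lmeet_l. apply (lle_trans (lmeet_r _ _)), lmeet_l. }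
  assert (Hred : forall a, lzero ≼ a -> lmeet a u = lzero -> a = lzero).
  { intros a Ha Hau. destruct (proj2 (proj2 Hu) a) as [n Hn].
    rewrite <- (meet_eq _ _ _ Hn). apply disj_n; auto using u_pos. }
  destruct (classic (x' = lzero)) as [E|E]; [left; apply Hred; auto|].
  destruct (classic (y' = lzero)) as [F|F]; [right; apply Hred; auto|].
  exfalso. destruct (HypM y' Hy' (lmeet_r _ _) F x') as [n Hn].
  apply E. rewrite <- (meet_eq _ _ _ Hn). apply disj_n; auto.
Qed.

Lemma sign g : lzero ≼ g \/ g ≼ lzero.
Proof.
  set (c := lmeet g lzero). set (b := lopp c). set (a := g ⊞ b).
  assert (Hc : c ≼ lzero) by apply lmeet_r.
  assert (Hb : lzero ≼ b). { unfold b. rewrite <- opp0. apply le_opp; exact Hc. }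
  assert (Ha : lzero ≼ a). { unfold a, b. rewrite <- (laddNr c). apply lle_addr, lmeet_l. }
  assert (Hab : lmeet a b = lzero).
  { unfold a. rewrite <- (ladd0l b) at 2. rewrite <- meet_addr. unfold b. apply laddNr. }
  destruct (disj_zero a b Ha Hb Hab) as [E|E].
  - right. assert (g = c). { unfold a, b in E. rewrite <- (ladd0r g), <- (laddNl c), laddA, E, ladd0l. reflexivity. }
    rewrite H. exact Hc.
  - left. unfold b in E. assert (c = lzero) by (rewrite <- (opp_opp _ c), E; apply opp0).
    rewrite <- H. apply lmeet_l.
Qed.

Lemma total x y : x ≼ y \/ y ≼ x.
Proof.
  destruct (sign (y ⊞ lopp x)) as [H|H]; [left|right].
  - apply (le_addr_inv _ (lopp x)). rewrite laddNr. exact H.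
  - apply (le_addr_inv _ (lopp x)). rewrite laddNr. exact H.
Qed.

Definition lt x y := x ≼ y /\ x <> y.

Lemma not_le_lt x y : ~ x ≼ y -> lt y x.
Proof. intro H. destruct (total x y) as [K|K]; [contradiction|]. split; auto. intro E; subst; apply H, lle_refl. Qed.
Lemma lt_not_le x y : lt x y -> ~ y ≼ x.
Proof. intros [H1 H2] H3. apply H2, lle_anti; auto. Qed.

Lemma lt_le_trans x y z : lt x y -> y ≼ z -> lt x z.
Proof. intros [H1 H2] H3. split. eapply lle_trans; eauto. intro E; subst. apply H2, lle_anti; auto. Qed.
Lemma le_lt_trans x y z : x ≼ y -> lt y z -> lt x z.
Proof. intros H1 [H2 H3]. split. eapply lle_trans; eauto. intro E; subst. apply H3, lle_anti; auto. Qed.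

Lemma lt_addl a x y : lt x y -> lt (a ⊞ x) (a ⊞ y).
Proof. intros [H1 H2]. split. apply lle_addl; auto. intro E. apply H2. eapply addK_l; eauto. Qed.
Lemma lt_addr a x y : lt x y -> lt (x ⊞ a) (y ⊞ a).
Proof. intros [H1 H2]. split. apply lle_addr; auto. intro E. apply H2. eapply addK_r; eauto. Qed.
Lemma lt_add2 a b c d : lt a b -> c ≼ d -> lt (a ⊞ c) (b ⊞ d).
Proof. intros H1 H2. apply (lt_le_trans _ (b ⊞ c)). apply lt_addr; auto. apply lle_addl; auto. Qed.
Lemma lt_add2' a b c d : a ≼ b -> lt c d -> lt (a ⊞ c) (b ⊞ d).
Proof. intros H1 H2. apply (le_lt_trans _ (b ⊞ c)). apply lle_addr; auto. apply lt_addl; auto. Qed.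

Lemma arch d : lt lzero d -> forall g, exists n, g ≼ lnmul n d.
Proof.
  intros [Hd Hd0] g. destruct (total d u) as [H|H].
  - apply HypM; auto.
  - destruct (proj2 (proj2 Hu) g) as [n Hn]. exists n. eapply lle_trans; [exact Hn|]. apply nmul_mono; auto.
Qed.

Lemma arch_lt d : lt lzero d -> forall g, exists n, lt g (lnmul n d).
Proof.
  intros Hd g. destruct (arch d Hd g) as [n Hn]. exists (S n). simpl.
  apply (le_lt_trans _ (lzero ⊞ g)). rewrite ladd0l; apply lle_refl.
  apply lt_add2; auto.
Qed.

Lemma floor d x : lt lzero d -> lzero ≼ x -> exists m, lnmul m d ≼ x /\ lt x (lnmul (S m) d).
Proof.
  intros Hd Hx. destruct (arch_lt d Hd x) as [N HN]. induction N.
  - exfalso. simpl in HN. apply (lt_not_le _ _ HN Hx).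
  - destruct (classic (lt x (lnmul N d))) as [K|K]; [apply IHN; auto|].
    exists N. split; auto. destruct (total (lnmul N d) x) as [L|L]; auto.
    destruct (classic (lnmul N d = x)) as [E|E]. rewrite E; apply lle_refl.
    exfalso. apply K. split; auto.
Qed.


Lemma comm_pos x y : lzero ≼ x -> lzero ≼ y -> x ⊞ y = y ⊞ x.
Proof.
  intros Hx Hy.
  assert (W : forall x y, lzero ≼ x -> lzero ≼ y -> ~ lt (x ⊞ y) (y ⊞ x)).
  { clear x y Hx Hy. intros x y Hx Hy Hlt.
    set (eps := lopp (x ⊞ y) ⊞ (y ⊞ x)).
    assert (He : lt lzero eps).
    { unfold eps. rewrite <- (laddNl (x ⊞ y)). apply lt_addl; auto. }
    destruct (classic (exists a, lt lzero a /\ forall z, lt lzero z -> a ≼ z)) as [[a [Ha Hmin]]|NL].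
    - assert (Hex : forall w, lzero ≼ w -> exists m, w = lnmul m a).
      { intros w Hw. destruct (floor a w Ha Hw) as [m [H1 H2]]. exists m.
        set (r := lopp (lnmul m a) ⊞ w).
        destruct (classic (r = lzero)) as [E|E].
        + assert (w = lnmul m a ⊞ r) by (unfold r; rewrite laddA, laddNr, ladd0l; reflexivity).
          rewrite H, E, ladd0r; reflexivity.
        + exfalso. assert (Hr0 : lt lzero r).
          { split; [|auto]. unfold r. rewrite <- (laddNl (lnmul m a)). apply lle_addl; auto. }
          assert (Hra : lt r a).
          { unfold r. simpl in H2. assert (K := lt_addl (lopp (lnmul m a)) _ _ H2).
            rewrite nmul_comm, laddA, laddNl, ladd0l in K. exact K. }
          exact (lt_not_le _ _ Hra (Hmin r Hr0)). }
      destruct (Hex x Hx) as [m Em], (Hex y Hy) as [n En].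
      destruct Hlt as [_ Hne]. apply Hne. rewrite Em, En, !nmul_add, Nat.add_comm. reflexivity.
    - assert (Hc : exists c, lt lzero c /\ lt c eps).
      { apply NNPP. intro K. apply NL. exists eps. split; auto. intros z Hz.
        destruct (total eps z) as [L|L]; auto.
        destruct (classic (z = eps)) as [E|E]. rewrite E; apply lle_refl.
        exfalso. apply K. exists z. split; auto. split; auto. }
      destruct Hc as [c [Hc0 Hce]].
      assert (Hd : exists d, lt lzero d /\ d ⊞ d ≼ eps).
      { destruct (classic (c ⊞ c ≼ eps)) as [L|L]. exists c; auto.
        apply not_le_lt in L. exists (lopp c ⊞ eps). split.
        - rewrite <- (laddNl c). apply lt_addl; auto.
        - assert (Hdc : lopp c ⊞ eps ≼ c).
          { apply (le_addl_inv _ c). rewrite laddA, laddNr, ladd0l. apply L. }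
          apply (lle_trans (y := c ⊞ (lopp c ⊞ eps))). apply lle_addr; auto.
          rewrite laddA, laddNr, ladd0l. apply lle_refl. }
      destruct Hd as [d [Hd0 Hdd]].
      destruct (floor d x Hd0 Hx) as [m [Hm1 Hm2]].
      destruct (floor d y Hd0 Hy) as [n [Hn1 Hn2]].
      assert (L1 : lnmul (m + n) d ≼ x ⊞ y). { rewrite <- nmul_add. apply le_add2; auto. }
      assert (L2 : lt (y ⊞ x) (lnmul (m + n) d ⊞ (d ⊞ d))).
      { apply (lt_le_trans _ (lnmul (S n) d ⊞ lnmul (S m) d)).
        apply lt_add2; auto. destruct Hm2; auto.
        rewrite nmul_add. replace (d ⊞ d) with (lnmul 2 d) by (simpl; rewrite ladd0r; reflexivity).
        rewrite nmul_add. replace (S n + S m)%nat with (m + n + 2)%nat by lia. apply lle_refl. }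
      assert (L3 : lt eps (d ⊞ d)).
      { unfold eps. replace (d ⊞ d) with (lopp (lnmul (m + n) d) ⊞ (lnmul (m + n) d ⊞ (d ⊞ d)))
          by (rewrite laddA, laddNl, ladd0l; reflexivity).
        apply lt_add2'; auto. apply le_opp; auto. }
      exact (lt_not_le _ _ (lt_le_trans _ _ _ L3 Hdd) (lle_refl _)). }
  destruct (classic (x ⊞ y = y ⊞ x)) as [E|E]; auto. exfalso.
  destruct (total (x ⊞ y) (y ⊞ x)) as [L|L].
  - apply (W x y Hx Hy). split; auto.
  - apply (W y x Hy Hx). split; auto.
Qed.

Lemma comm_opp x y : x ⊞ y = y ⊞ x -> lopp x ⊞ y = y ⊞ lopp x.
Proof. intro H. apply (addK_l _ x). rewrite laddA, laddNr, ladd0l, laddA, H, <- laddA, laddNr, ladd0r. reflexivity. Qed.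

Lemma addC x y : x ⊞ y = y ⊞ x.
Proof.
  assert (P : forall x y, lzero ≼ x -> x ⊞ y = y ⊞ x).
  { clear x y. intros x y Hx. destruct (sign y) as [Hy|Hy]. apply comm_pos; auto.
    rewrite <- (opp_opp _ y). symmetry. apply comm_opp. symmetry. apply comm_pos; auto.
    rewrite <- opp0. apply le_opp; auto. }
  destruct (sign x) as [Hx|Hx]. apply P; auto.
  rewrite <- (opp_opp _ x). apply comm_opp. apply P. rewrite <- opp0. apply le_opp; auto.
Qed.


Lemma Gam_eq (a b : Gam u) : proj1_sig a = proj1_sig b -> a = b.
Proof. destruct a as [a Ha], b as [b Hb]; simpl; intro E; subst. f_equal. apply proof_irrelevance. Qed.

Definition mk x (H0 : lzero ≼ x) (H1 : x ≼ u) : Gam u := exist _ x (conj H0 H1).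

Lemma join_eq a b : a ≼ b -> ljoin a b = b.
Proof. intro H. apply lle_anti. apply ljoin_lub; auto using lle_refl. apply ljoin_r. Qed.

Lemma subK x y : x ⊞ lopp y ⊞ y = x.
Proof. rewrite <- laddA, laddNl, ladd0r. reflexivity. Qed.
Lemma subK' x y : x ⊞ y ⊞ lopp y = x.
Proof. rewrite <- laddA, laddNr, ladd0r. reflexivity. Qed.

Lemma le_sub0 a b : a ≼ b -> lzero ≼ b ⊞ lopp a.
Proof. intro H. rewrite <- (laddNr a). apply lle_addr; auto. Qed.

Lemma sum_def (x y : Gam u) : Gsum_defined x y <-> proj1_sig x ⊞ proj1_sig y ≼ u.
Proof.
  unfold Gsum_defined, Godot. set (a := proj1_sig x); set (b := proj1_sig y). split.
  - intro H. assert (K : a ⊞ lopp u ⊞ b ≼ lzero) by (rewrite <- H; apply ljoin_l).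
    rewrite <- laddA, (addC (lopp u)), laddA in K. apply (le_addr_inv _ (lopp u)). rewrite laddNr; auto.
  - intro H. apply join_eq. rewrite <- laddA, (addC (lopp u)), laddA, <- (laddNr u). apply lle_addr; auto.
Qed.

Lemma oplus_lo (x y : Gam u) (H : proj1_sig x ⊞ proj1_sig y ≼ u) : proj1_sig (Goplus x y) = proj1_sig x ⊞ proj1_sig y.
Proof. simpl. apply meet_eq; auto. Qed.
Lemma oplus_hi (x y : Gam u) (H : u ≼ proj1_sig x ⊞ proj1_sig y) : proj1_sig (Goplus x y) = u.
Proof. simpl. rewrite meetC. apply meet_eq; auto. Qed.

Lemma nmul_addD n a b : lnmul n (a ⊞ b) = lnmul n a ⊞ lnmul n b.
Proof. induction n; simpl. rewrite ladd0l; auto. rewrite IHn, <- !laddA. f_equal. rewrite !laddA. f_equal. apply addC. Qed.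

Lemma nmul_mul (p q : nat) g : lnmul p (lnmul q g) = lnmul (p * q) g.
Proof. induction p; simpl. auto. rewrite IHp, nmul_add. auto. Qed.

Lemma nmul_zero n : lnmul n (@lzero G) = lzero.
Proof. induction n; simpl; auto. rewrite IHn, ladd0l; auto. Qed.

Lemma nmul_lt n a b : (0 < n)%nat -> lt a b -> lt (lnmul n a) (lnmul n b).
Proof. intros Hn H. destruct n. lia. simpl. apply lt_add2; auto. apply nmul_mono. destruct H; auto. Qed.

Lemma nmul_pos n d : (0 < n)%nat -> lt lzero d -> lt lzero (lnmul n d).
Proof. intros Hn H. pose proof (nmul_lt n _ _ Hn H) as K. rewrite nmul_zero in K. exact K. Qed.


Lemma u_lt : lt lzero u. Proof. split. exact u_pos. intro E. apply u_nz. auto. Qed.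

Lemma nmulu_split (p q : nat) : (q <= p)%nat -> lnmul p u = lnmul q u ⊞ lnmul (p - q) u.
Proof. intro H. rewrite nmul_add. f_equal. lia. Qed.

Lemma nmulu_le (p q : nat) : lnmul p u ≼ lnmul q u -> (p <= q)%nat.
Proof.
  intro H. destruct (Nat.le_gt_cases p q) as [L|L]; auto. exfalso.
  rewrite (nmulu_split p q) in H by lia.
  assert (K : lt (lnmul q u ⊞ lzero) (lnmul q u ⊞ lnmul (p - q) u)).
  { apply lt_addl. apply nmul_pos. lia. apply u_lt. }
  rewrite ladd0r in K. exact (lt_not_le _ _ K H).
Qed.

Lemma nmulu_lt (p q : nat) : lt (lnmul p u) (lnmul q u) -> (p < q)%nat.
Proof.
  intro H. destruct (Nat.le_gt_cases q p) as [L|L]; auto. exfalso.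
  apply (lt_not_le _ _ H). rewrite (nmulu_split p q) by lia.
  rewrite <- (ladd0r (lnmul q u)) at 1. apply lle_addl. apply nmul_nonneg, u_pos.
Qed.

Definition S_ (x : Gam u) (r : R) : Prop :=
  exists p q : nat, (0 < q)%nat /\ r = (INR p / INR q)%R /\ lnmul p u ≼ lnmul q (proj1_sig x).

Lemma INR_div_le (p q p' q' : nat) : (0 < q)%nat -> (0 < q')%nat -> (p * q' <= p' * q)%nat -> (INR p / INR q <= INR p' / INR q')%R.
Proof.
  intros Hq Hq' H. apply le_INR in H. rewrite !mult_INR in H. apply lt_0_INR in Hq, Hq'.
  apply (Rmult_le_reg_r (INR q * INR q')). nra.
  replace (INR p / INR q * (INR q * INR q'))%R with (INR p * INR q')%R by (field; lra).
  replace (INR p' / INR q' * (INR q * INR q'))%R with (INR p' * INR q)%R by (field; lra). lra.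
Qed.

Lemma S_bound (x : Gam u) : bound (S_ x).
Proof.
  exists 1%R. intros r [p [q [Hq [E H]]]]. subst r.
  replace 1%R with (INR 1 / INR 1)%R by (simpl; field).
  apply INR_div_le; auto. assert (lnmul p u ≼ lnmul q u).
  { eapply lle_trans; [exact H|]. apply nmul_mono. exact (proj2 (proj2_sig x)). }
  apply nmulu_le in H0. lia.
Qed.

Lemma S_ne (x : Gam u) : exists r, S_ x r.
Proof. exists (INR 0 / INR 1)%R. exists 0%nat, 1%nat. repeat split; auto. simpl. rewrite ladd0r. exact (proj1 (proj2_sig x)). Qed.

Definition m (x : Gam u) : R := proj1_sig (completeness (S_ x) (S_bound x) (S_ne x)).

Lemma m_lub (x : Gam u) : is_lub (S_ x) (m x).
Proof. exact (proj2_sig (completeness (S_ x) (S_bound x) (S_ne x))). Qed.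

Lemma m_ge (x : Gam u) (p q : nat) : (0 < q)%nat -> lnmul p u ≼ lnmul q (proj1_sig x) -> (INR p / INR q <= m x)%R.
Proof. intros Hq H. apply (proj1 (m_lub x)). exists p, q. auto. Qed.

Lemma m_le (x : Gam u) (k q : nat) : (0 < q)%nat -> lt (lnmul q (proj1_sig x)) (lnmul (S k) u) -> (m x <= INR (S k) / INR q)%R.
Proof.
  intros Hq H. apply (proj2 (m_lub x)). intros r [p' [q' [Hq' [E H']]]]. subst r.
  apply INR_div_le; auto.
  assert (K1 : lnmul (q * p') u ≼ lnmul (q * q') (proj1_sig x)).
  { rewrite <- !nmul_mul. apply nmul_mono; auto. }
  assert (K2 : lt (lnmul (q' * q) (proj1_sig x)) (lnmul (q' * S k) u)).
  { rewrite <- !nmul_mul. apply nmul_lt; auto. }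
  rewrite Nat.mul_comm in K2. pose proof (nmulu_lt _ _ (le_lt_trans _ _ _ K1 K2)). lia.
Qed.

Lemma m_bounds (x : Gam u) : (0 <= m x <= 1)%R.
Proof.
  split.
  - replace 0%R with (INR 0 / INR 1)%R by (simpl; field). apply m_ge; auto. simpl. rewrite ladd0r. exact (proj1 (proj2_sig x)).
  - apply (proj2 (m_lub x)). intros r Hr. destruct (S_bound x) as [b Hb].
    intros. destruct Hr as [p [q [Hq [E H]]]]. subst r.
    replace 1%R with (INR 1 / INR 1)%R by (simpl; field).
    apply INR_div_le; auto. assert (lnmul p u ≼ lnmul q u).
    { eapply lle_trans; [exact H|]. apply nmul_mono. exact (proj2 (proj2_sig x)). }
    apply nmulu_le in H0. lia.
Qed.

Lemma m_one H0 : m (Gam1 H0) = 1%R.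
Proof.
  apply Rle_antisym. apply m_bounds.
  replace 1%R with (INR 1 / INR 1)%R by (simpl; field). apply m_ge; auto. apply lle_refl.
Qed.

Lemma small_zero (d : R) : (forall q : nat, (0 < q)%nat -> (Rabs d <= 2 / INR q)%R) -> d = 0%R.
Proof.
  intro H. destruct (Req_dec d 0) as [E|E]; auto. exfalso.
  assert (Hd : (0 < Rabs d)%R) by (apply Rabs_pos_lt; auto).
  destruct (archimed_cor1 (Rabs d / 2) ltac:(lra)) as [N [HN HN0]].
  specialize (H N HN0). apply lt_0_INR in HN0.
  assert (2 / INR N = 2 * / INR N)%R by (unfold Rdiv; ring). lra.
Qed.

Lemma floor_u g : lzero ≼ g -> exists k, lnmul k u ≼ g /\ lt g (lnmul (S k) u).
Proof. intro H. apply floor; auto. apply u_lt. Qed.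

Lemma m_add (x y z : Gam u) : proj1_sig z = proj1_sig x ⊞ proj1_sig y -> m z = (m x + m y)%R.
Proof.
  intro Ez.
  assert (m z - m x - m y = 0)%R; [|lra].
  apply small_zero. intros q Hq.
  destruct (floor_u (lnmul q (proj1_sig x))) as [kx [Hx1 Hx2]]. apply nmul_nonneg, (proj1 (proj2_sig x)).
  destruct (floor_u (lnmul q (proj1_sig y))) as [ky [Hy1 Hy2]]. apply nmul_nonneg, (proj1 (proj2_sig y)).
  assert (Z1 : lnmul (kx + ky) u ≼ lnmul q (proj1_sig z)).
  { rewrite Ez, nmul_addD, <- nmul_add. apply le_add2; auto. }
  assert (Z2 : lt (lnmul q (proj1_sig z)) (lnmul (S (S (kx + ky))) u)).
  { rewrite Ez, nmul_addD. replace (S (S (kx + ky))) with (S kx + S ky)%nat by lia.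
    rewrite <- nmul_add. apply lt_add2; auto. destruct Hy2; auto. }
  pose proof (m_ge _ _ _ Hq Z1). pose proof (m_le _ _ _ Hq Z2).
  pose proof (m_ge _ _ _ Hq Hx1). pose proof (m_le _ _ _ Hq Hx2).
  pose proof (m_ge _ _ _ Hq Hy1). pose proof (m_le _ _ _ Hq Hy2).
  assert (HQ : (0 < INR q)%R) by (apply lt_0_INR; auto).
  rewrite !S_INR, plus_INR in *. unfold Rdiv in *.
  apply Rabs_le. split; nra.
Qed.


Lemma addsubK a : u ⊞ (a ⊞ lopp u) = a.
Proof. rewrite addC. apply subK. Qed.

Lemma sub_le a b : lzero ≼ b -> a ⊞ lopp b ≼ a.
Proof. intro H. rewrite <- (ladd0r a) at 2. apply lle_addl. apply lle_opp0; auto. Qed.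

Lemma mkd (y x : Gam u) : proj1_sig x ≼ proj1_sig y -> { w : Gam u | proj1_sig w = proj1_sig y ⊞ lopp (proj1_sig x) }.
Proof. intro H. exists (mk _ (le_sub0 _ _ H) (lle_trans (sub_le _ _ (proj1 (proj2_sig x))) (proj2 (proj2_sig y)))). auto. Qed.

Section ST.
Variables (V : riesz) (e : V).
Hypothesis He0 : rle rzero e.
Variable t : Gam u -> V.
Hypothesis Ht : is_Rstate (proj1 Hu) e t.

Lemma ac4 (a b c d : V) : radd (radd a b) (radd c d) = radd (radd (radd d b) c) a.
Proof.
  rewrite (raddC _ a). rewrite <- !raddA. f_equal. rewrite (raddC c d), raddA, (raddC b d), <- raddA. auto.
Qed.

Lemma rswap (a b c : V) : radd a (radd b c) = radd b (radd a c).
Proof. rewrite !raddA, (raddC a b). auto. Qed.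

Lemma t_sum (x y z : Gam u) : proj1_sig z = proj1_sig x ⊞ proj1_sig y -> t z = radd (t x) (t y).
Proof.
  intro E. assert (H : proj1_sig x ⊞ proj1_sig y ≼ u) by (rewrite <- E; exact (proj2 (proj2_sig z))).
  destruct Ht as [_ [_ Ha]]. rewrite <- Ha by (apply sum_def; auto).
  f_equal. apply Gam_eq. rewrite oplus_lo; auto.
Qed.

Lemma t_zero (z : Gam u) : proj1_sig z = lzero -> t z = rzero.
Proof. intro E. assert (K : t z = radd (t z) (t z)) by (apply t_sum; rewrite E, ladd0l; auto).
  symmetry. apply (raddK _ (t z)). rewrite radd0r. auto. Qed.

Lemma t_one (z : Gam u) : proj1_sig z = u -> t z = e.
Proof. intro E. destruct Ht as [_ [H1 _]]. rewrite <- H1. f_equal. apply Gam_eq. auto. Qed.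

Lemma t_range (x : Gam u) : rle rzero (t x) /\ rle (t x) e.
Proof. destruct Ht as [H _]. apply H. Qed.

Lemma t_comp (x w : Gam u) : proj1_sig w = u ⊞ lopp (proj1_sig x) -> radd (t x) (t w) = e.
Proof. intro E. rewrite <- (t_one (Gam1 (proj1 Hu))) by auto. symmetry. apply t_sum. rewrite E. simpl.
  rewrite addC. rewrite subK. auto. Qed.

Lemma t_mono (x y : Gam u) : proj1_sig x ≼ proj1_sig y -> rle (t x) (t y).
Proof.
  intro H. destruct (mkd y x H) as [w Ew].
  assert (E : proj1_sig y = proj1_sig x ⊞ proj1_sig w) by (rewrite Ew, addC, subK; auto).
  rewrite (t_sum _ _ _ E). rewrite <- (radd0r _ (t x)) at 1. rewrite !(raddC (t x)). apply rle_add.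
  apply t_range.
Qed.

Lemma decomp (q : nat) (x : Gam u) : exists k (r : Gam u), lt (proj1_sig r) u /\
  lnmul q (proj1_sig x) = lnmul k u ⊞ proj1_sig r /\ rnmul q (t x) = radd (rnmul k e) (t r).
Proof.
  induction q.
  - exists 0%nat, (Gam0 (proj1 Hu)). simpl. split. apply u_lt. split. rewrite ladd0l; auto.
    rewrite radd0. symmetry. apply t_zero. auto.
  - destruct IHq as [k [r [Hr [E1 E2]]]].
    set (a := proj1_sig x ⊞ proj1_sig r).
    assert (Ha0 : lzero ≼ a) by (apply lle_add0; [exact (proj1 (proj2_sig x)) | exact (proj1 (proj2_sig r))]).
    destruct (classic (lt a u)) as [L|L].
    + exists k, (mk a Ha0 (proj1 L)). simpl. split; auto. split.
      * rewrite E1. fold a. unfold a. rewrite laddA, (addC (proj1_sig x)), <- laddA. auto.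
      * rewrite E2. rewrite rswap. f_equal. symmetry. apply t_sum. auto.
    + assert (Lu : u ≼ a) by (destruct (total a u) as [K|K]; auto; destruct (classic (a = u)) as [E|E];
        [rewrite E; apply lle_refl | exfalso; apply L; split; auto]).
      assert (Hr1 : lt (a ⊞ lopp u) u).
      { apply (le_lt_trans _ (proj1_sig r)); auto. unfold a. rewrite (addC (proj1_sig x)).
        rewrite <- (subK' (proj1_sig r) u) at 2. rewrite <- !laddA. apply lle_addl, lle_addr.
        exact (proj2 (proj2_sig x)). }
      set (r' := mk (a ⊞ lopp u) (le_sub0 _ _ Lu) (proj1 Hr1)).
      exists (S k), r'. split; auto. destruct (mkd (Gam1 (proj1 Hu)) r (proj1 Hr)) as [w Ew]. simpl in Ew.
      assert (Ex : proj1_sig x = proj1_sig r' ⊞ proj1_sig w).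
      { simpl. rewrite Ew. unfold a. rewrite laddA, subK, subK'. auto. }
      split.
      * simpl. rewrite E1. rewrite (addC u), <- laddA, addsubK. unfold a. rewrite laddA, (addC (proj1_sig x)), <- laddA. auto.
      * simpl rnmul. rewrite E2. set (ke := rnmul k e). rewrite (t_sum _ _ _ Ex). rewrite <- (t_comp r w) by auto.
        apply ac4.
Qed.

Lemma decomp_bounds (q : nat) (x : Gam u) (k : nat) (r : Gam u) : (0 < q)%nat -> lt (proj1_sig r) u ->
  lnmul q (proj1_sig x) = lnmul k u ⊞ proj1_sig r -> (INR k <= INR q * m x <= INR k + 1)%R.
Proof.
  intros Hq Hr E.
  assert (L1 : lnmul k u ≼ lnmul q (proj1_sig x)).
  { rewrite E. rewrite <- (ladd0r (lnmul k u)) at 1. apply lle_addl. exact (proj1 (proj2_sig r)). }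
  assert (L2 : lt (lnmul q (proj1_sig x)) (lnmul (S k) u)).
  { rewrite E. simpl. rewrite (addC u). apply lt_addl; auto. }
  pose proof (m_ge _ _ _ Hq L1). pose proof (m_le _ _ _ Hq L2).
  apply lt_0_INR in Hq. rewrite S_INR in *. unfold Rdiv in *.
  split.
  - apply (Rmult_le_reg_r (/ INR q)). apply Rinv_0_lt_compat; auto.
    replace (INR q * m x * / INR q)%R with (m x) by (field; lra). auto.
  - apply (Rmult_le_reg_r (/ INR q)). apply Rinv_0_lt_compat; auto.
    replace (INR q * m x * / INR q)%R with (m x) by (field; lra). auto.
Qed.

Lemma t_unique : archimedean V -> forall x : Gam u, t x = rscal (m x) e.
Proof.
  intros HA x.
  assert (Ha : rle (radd (t x) (rscal (- m x) e)) rzero).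
  { apply (HA _ e). intro n. destruct n as [|n]. simpl. auto.
    destruct (decomp (S n) x) as [k [r [Hr [E1 E2]]]].
    pose proof (decomp_bounds (S n) x k r ltac:(lia) Hr E1) as B.
    rewrite rnmul_scal, rscalDr, rscalA, <- rnmul_scal, E2, rnmul_scal.
    apply (rle_trans (y := radd (radd (rscal (INR k) e) e) (rscal (INR (S n) * - m x) e))).
    - apply rle_add. rewrite !(raddC (rscal (INR k) e)). apply rle_add. apply t_range.
    - replace (radd (radd (rscal (INR k) e) e) (rscal (INR (S n) * - m x) e)) with
        (rscal (INR k + 1 + INR (S n) * - m x) e) by (rewrite !rscalDl, rscal1; auto).
      rewrite <- (rscal1 e) at 2. apply scal_le; auto. lra. }
  assert (Hb : rle (radd (rscal (m x) e) (rscal (-1) (t x))) rzero).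
  { apply (HA _ e). intro n. destruct n as [|n]. simpl. auto.
    destruct (decomp (S n) x) as [k [r [Hr [E1 E2]]]].
    pose proof (decomp_bounds (S n) x k r ltac:(lia) Hr E1) as B.
    rewrite rnmul_scal, rscalDr, !rscalA.
    replace (INR (S n) * -1)%R with (-1 * INR (S n))%R by ring.
    rewrite <- (rscalA (-1) (INR (S n)) (t x)), <- rnmul_scal, E2, rnmul_scal, rscalDr, rscalA.
    apply (rle_trans (y := radd (rscal (INR (S n) * m x) e) (radd (rscal (-1 * INR k) e) rzero))).
    - rewrite !(raddC (rscal (INR (S n) * m x) e)). apply rle_add.
      rewrite !(raddC (rscal (-1 * INR k) e)). apply rle_add. apply scal_m1_le, t_range.
    - rewrite radd0r, <- rscalDl. rewrite <- (rscal1 e) at 2. apply scal_le; auto. lra. }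
  apply rle_anti.
  - pose proof (rle_add (rscal (m x) e) Ha) as K. rewrite radd0, <- raddA, <- rscalDl in K.
    replace (- m x + m x)%R with 0%R in K by ring. rewrite rscal0l, radd0r in K. exact K.
  - pose proof (rle_add (t x) Hb) as K. rewrite radd0, <- raddA, scal_m1, radd0r in K. exact K.
Qed.

Lemma t_neg (x w : Gam u) : proj1_sig w = u ⊞ lopp (proj1_sig x) -> t w = radd e (ropp (t x)).
Proof. intro E. apply (raddK _ (t x)). rewrite (t_comp x w E), rswap, raddNr, radd0r. auto. Qed.

Lemma t_morph : is_Rstate_morphism (proj1 Hu) e t.
Proof.
  split; [exact t_range|]. split; [apply t_zero; auto|]. split; [|split].
  - intros x y. destruct (total (proj1_sig x ⊞ proj1_sig y) u) as [L|L].
    + assert (E : t (Goplus x y) = radd (t x) (t y)) by (apply t_sum; apply oplus_lo; auto).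
      rewrite meet_le. auto. rewrite <- E. apply t_range.
    + rewrite (t_one _ (oplus_hi _ _ L)). symmetry. apply meet_ge.
      destruct (mkd (Gam1 (proj1 Hu)) x (proj2 (proj2_sig x))) as [w Ew]. simpl in Ew.
      rewrite <- (t_comp x w Ew). apply rle_add2. apply rle_refl. apply t_mono.
      rewrite Ew. pose proof (lle_addr G (lopp (proj1_sig x)) _ _ L) as K.
      rewrite (addC (proj1_sig x)), subK' in K. exact K.
  - intro x. apply t_neg. auto.
  - intro x. rewrite raddC. apply t_neg. simpl. apply addC.
Qed.

Lemma t_ker (Hne : e <> rzero) : Gmaximal_ideal (Ker t).
Proof.
  unfold Ker. destruct t_morph as [_ [M0 [Mo _]]].
  assert (Hid : Gideal (fun x : Gam u => t x = rzero)).
  { split; [exists (Gam0 (proj1 Hu)); auto|]. split.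
    - intros x y Hy Hxy. apply rle_anti. rewrite <- Hy. apply t_mono; auto. apply t_range.
    - intros x y Hx Hy. rewrite Mo, Hx, Hy, radd0. apply meet_le; auto. }
  split; auto. split. exists (Gam1 (proj1 Hu)). rewrite t_one; auto.
  intros J [[y0 Jy0] [Jdown Jadd]] [z Hz] Hsub x Jx.
  destruct (classic (proj1_sig x = lzero)) as [E|E]. apply t_zero; auto.
  exfalso.
  assert (It : forall n, exists w : Gam u, J w /\ (proj1_sig w = u \/ proj1_sig w = lnmul n (proj1_sig x))).
  { induction n.
    - exists (Gam0 (proj1 Hu)). split; [|right; auto]. apply (Jdown _ y0); auto. exact (proj1 (proj2_sig y0)).
    - destruct IHn as [w [Jw [Ew|Ew]]]; exists (Goplus x w); (split; [apply Jadd; auto|]).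
      + left. apply oplus_hi. rewrite Ew. apply le_0_addr. exact (proj1 (proj2_sig x)).
      + destruct (total (proj1_sig x ⊞ proj1_sig w) u) as [L|L].
        * right. rewrite oplus_lo; auto. rewrite Ew. auto.
        * left. apply oplus_hi; auto. }
  destruct (HypM (proj1_sig x) (proj1 (proj2_sig x)) (proj2 (proj2_sig x)) E u) as [N HN].
  destruct (It N) as [w [Jw Ew]].
  assert (Ew' : proj1_sig w = u).
  { destruct Ew as [Ew|Ew]; auto. apply lle_anti. exact (proj2 (proj2_sig w)). rewrite Ew; auto. }
  apply Hz. apply (Jdown _ w); auto. rewrite Ew'. exact (proj2 (proj2_sig z)).
Qed.

End ST.
Lemma s_state (V : riesz) (e : V) (He0 : rle rzero e) : is_Rstate (proj1 Hu) e (fun x : Gam u => rscal (m x) e).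
Proof.
  split; [|split].
  - intro x. destruct (m_bounds x). split. apply scal_nonneg; auto.
    rewrite <- (rscal1 e) at 2. apply scal_le; auto.
  - rewrite m_one. apply rscal1.
  - intros x y H. rewrite <- rscalDl. f_equal. apply m_add. apply oplus_lo. apply sum_def; auto.
Qed.

Lemma main_lemma :
  Gam_is_MV u /\
  (forall (V : riesz) (e : V), rstrong_unit e ->
     (exists s : Gam u -> V, is_Rstate (proj1 Hu) e s) /\
     (forall s : Gam u -> V, is_Rstate (proj1 Hu) e s ->
        is_Rstate_morphism (proj1 Hu) e s /\ Gmaximal_ideal (Ker s)) /\
     (archimedean V ->
        exists s : Gam u -> V, is_Rstate (proj1 Hu) e s /\
          forall t : Gam u -> V, is_Rstate (proj1 Hu) e t -> forall x : Gam u, t x = s x)).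
Proof.
  split.
  - intros x y. apply Gam_eq. simpl. rewrite addC. auto.
  - intros V e [He0 [Hne _]]. split; [|split].
    + eexists. apply s_state; auto.
    + intros s Hs. split. apply (t_morph V e s Hs). apply (t_ker V e He0 s Hs Hne).
    + intro HA. eexists. split. apply s_state; auto.
      intros t Ht x. apply (t_unique V e He0 t Ht HA).
Qed.

End TOT.

Theorem proposition3p14 (G : lgroup) (u : G) (Hu : lstrong_unit u) :
  (forall x : Gam u, proj1_sig x <> lzero -> lstrong_unit (proj1_sig x)) ->
  Gam_is_MV u /\
  (forall (V : riesz) (e : V), rstrong_unit e ->
     (exists s : Gam u -> V, is_Rstate (proj1 Hu) e s) /\
     (forall s : Gam u -> V, is_Rstate (proj1 Hu) e s ->
        is_Rstate_morphism (proj1 Hu) e s /\ Gmaximal_ideal (Ker s)) /\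
     (archimedean V ->
        exists s : Gam u -> V, is_Rstate (proj1 Hu) e s /\
          forall t : Gam u -> V, is_Rstate (proj1 Hu) e t -> forall x, t x = s x)).
Proof. intro Hyp. exact (main_lemma G u Hu Hyp). Qed.
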